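(* Let $k\ge 2$ and $d\in\{2,\dots,k\}$. For any $\alpha\in(0,1)$, any $\mu>1/k$ and any $\epsilon\in(0,\mu k-1)$, the random bipartite graph with $n$ variable vertices and $m=\lfloor\mu n\log n\rfloor$ constraint vertices has no $\alpha$-small $d$-stopping set with probability $1-O(n^{1-\mu k+\epsilon})$ as $n\to\infty$.
   Context: Random bipartite graph: variable vertices $[n]$, constraint vertices $[m]$; for each $a\in[m]$ independently, a $k$-tuple of pairwise distinct elements of $[n]$ is chosen uniformly among all $n(n-1)\cdots(n-k+1)$ such tuples, and $\partial(a)\subseteq[n]$ denotes the set of its entries (the neighbours of $a$). $d$-stopping set: a set $V'\subseteq[n]$ such that $|\partial(a)\cap V'|\notin\{1,2,\dots,d-1\}$ for every $a\in[m]$. For $\alpha\in(0,1)$, an $\alpha$-small $d$-stopping set is a nonempty $d$-stopping set of size smaller than $\alpha n$. *)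

(* Defs.v *)
From mathcomp Require Import all_boot.
Set Implicit Arguments. Unset Strict Implicit. Unset Printing Implicit Defensive.

(* A sample point of the random bipartite graph with n variables, m
   constraints and arity k: for each constraint a : 'I_m, a k-tuple
   (function 'I_k -> 'I_n) of variable vertices. *)
Definition config (n k m : nat) := {ffun 'I_m -> {ffun 'I_k -> 'I_n}}.

Definition valid_config n k m (G : config n k m) : bool :=
  [forall a, injectiveb (G a)].

Definition nbrs n k m (G : config n k m) (a : 'I_m) : {set 'I_n} :=
  [set (G a) i | i : 'I_k].

Definition stopping_set n k m (d : nat) (G : config n k m) (V : {set 'I_n}) : bool :=
  [forall a, (#|nbrs G a :&: V| == 0) || (d <= #|nbrs G a :&: V|)].

(* Number of valid configurations (the uniform sample space). *)
Definition total_count (n k m : nat) : nat :=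
  #|[set G : config n k m | valid_config G]|.

Definition bad_count (n k m d : nat) (small : nat -> bool) : nat :=
  #|[set G : config n k m | valid_config G &&
      [exists V : {set 'I_n}, [&& V != set0, small #|V| & stopping_set d G V]]]|.

From Stdlib Require Import Reals.
Open Scope R_scope.

Definition num_constraints (mu : R) (n : nat) : nat :=
  Z.to_nat (Int_part (mu * INR n * ln (INR n))).

Definition alpha_small (alpha : R) (n s : nat) : bool :=
  if Rlt_dec (INR s) (alpha * INR n) then true else false.

Definition prob_small_stopping (k d : nat) (alpha mu : R) (n : nat) : R :=
  INR (bad_count n k (num_constraints mu n) d (alpha_small alpha n))
  / INR (total_count n k (num_constraints mu n)).

(* Main.v *)
Require Import Defs.
From mathcomp Require Import all_boot zify.
Set Implicit Arguments. Unset Strict Implicit. Unset Printing Implicit Defensive.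
Local Open Scope nat_scope.

Definition injs n k : {set {ffun 'I_k -> 'I_n}} := [set f : {ffun 'I_k -> 'I_n} | injectiveb f].
Definition injon n k (X : {set 'I_n}) : {set {ffun 'I_k -> 'I_n}} :=
  [set f : {ffun 'I_k -> 'I_n} in ffun_on X | injectiveb f].
Definition imf n k (f : {ffun 'I_k -> 'I_n}) : {set 'I_n} := [set f i | i : 'I_k].
Definition AV n k d (V : {set 'I_n}) : {set {ffun 'I_k -> 'I_n}} :=
  [set f in injs n k | (#|imf f :&: V| == 0) || (d <= #|imf f :&: V|)].
Definition DV n k (V : {set 'I_n}) (v : 'I_n) : {set {ffun 'I_k -> 'I_n}} :=
  injon k (v |: ~: V) :\: injon k (~: V).

Lemma ffact_diff a j : (a.+1) ^_ j.+1 - a ^_ j.+1 = j.+1 * a ^_ j.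
Proof.
rewrite ffactSS ffactnSr.
case: (leqP j a) => h.
  have -> : a.+1 = (j.+1) + (a - j) by lia.
  by rewrite mulnDl [a ^_ j * _]mulnC addnK.
rewrite ffact_small //. by rewrite !muln0 mul0n.
Qed.

Lemma leq_pow x y e : x <= y -> x ^ e <= y ^ e.
Proof. move=> h; elim: e => [|e IH] //; rewrite !expnS; exact: leq_mul. Qed.

Lemma ffact_lb a j : (a - j) ^ j <= a ^_ j.
Proof.
elim: j => [|j IH] //.
rewrite ffactnSr expnSr. apply: leq_mul.
  apply: leq_trans IH. apply: leq_pow. lia.
lia.
Qed.

Lemma ffact_ub a j : a ^_ j <= a ^ j.
Proof.
elim: j => [|j IH] //. rewrite ffactnSr expnSr. apply: leq_mul => //. lia.
Qed.

Lemma imf_DV n k (V : {set 'I_n}) v f : v \in V -> f \in DV k V v -> imf f :&: V = [set v].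
Proof.
move=> vV; rewrite !inE => /and3P[H1 /forallP H2 inj].
apply/setP => x; rewrite !inE. apply/andP/eqP.
  case=> /imsetP[i _ ->] xV. move: (H2 i); rewrite !inE xV orbF. by move/eqP.
move=> ->; split => //.
have [i Hi]: exists i, f i \in V.
  apply/existsP. apply: contraR H1 => /existsPn H. rewrite inj andbT. apply/forallP => i.
  by rewrite inE; move: (H i) ->.
move: (H2 i); rewrite !inE Hi orbF => /eqP <-. by apply: imset_f.
Qed.

Lemma card_as_sum (T : finType) (A : {set T}) : #|A| = \sum_x (x \in A : nat).
Proof. rewrite -sum1_card big_mkcond /=; apply: eq_bigr => x _; by case: (x \in A). Qed.

Lemma AV_DV_sum n k d (V : {set 'I_n}) : 1 < d ->
  #|AV k d V| + \sum_(v in V) #|DV k V v| <= #|injs n k|.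
Proof.
move=> hd.
rewrite !card_as_sum.
rewrite (eq_bigr (fun v => \sum_f (f \in DV k V v : nat))); last by move=> v _; rewrite card_as_sum.
rewrite (exchange_big _ _ (index_enum _)) /= -big_split /=.
apply: leq_sum => f _.
case: (boolP [exists v0 in V, f \in DV k V v0]).
  case/exists_inP => v0 v0V fD.
  have hI := imf_DV v0V fD.
  have finj : f \in injs n k.
    move: fD; rewrite !inE => /and3P[_ _ h]; exact: h.
  have -> : (f \in AV k d V) = false.
    rewrite inE finj hI cards1 /=. apply/negbTE. rewrite -ltnNge. exact: hd.
  rewrite finj (bigD1 v0) //= fD big1 //.
  move=> v /andP[vV nv]. apply/eqP; rewrite eqb0. apply/negP => fv.
  have := imf_DV vV fv. rewrite hI => /set1_inj h. by rewrite h eqxx in nv.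
move=> /exists_inPn H.
rewrite big1; last by move=> v vV; rewrite (negbTE (H v vV)).
rewrite addn0 [f \in AV _ _ _]inE. by case: (f \in injs n k); case: (_ || _).
Qed.

Lemma card_injon n k (X : {set 'I_n}) : #|injon k X| = #|X| ^_ k.
Proof. by rewrite card_inj_ffuns_on card_ord. Qed.

Lemma card_DV n k (V : {set 'I_n}) v : v \in V ->
  #|DV k V v| = (n - #|V|).+1 ^_ k - (n - #|V|) ^_ k.
Proof.
move=> vV.
have hC : #|~: V| = n - #|V| by have := cardsC V; rewrite card_ord; lia.
rewrite /DV cardsD.
have -> : injon k (v |: ~: V) :&: injon k (~: V) = injon k (~: V).
  apply/setIidPr/subsetP => f; rewrite !inE => /andP[/forallP H ->].
  rewrite andbT; apply/forallP => x; rewrite !inE; move: (H x); rewrite !inE => ->.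
  by rewrite orbT.
rewrite !card_injon cardsU1 hC !inE vV /=. by rewrite add1n.
Qed.

Lemma AV_bound n k d (V : {set 'I_n}) : 1 < d -> 0 < k ->
  #|AV k d V| + #|V| * (k * (n - #|V| - k) ^ (k - 1)) <= n ^_ k.
Proof.
move=> hd hk.
have := AV_DV_sum k V hd.
rewrite (eq_bigr (fun v => (n - #|V|).+1 ^_ k - (n - #|V|) ^_ k)); last first.
  by move=> v vV; rewrite card_DV.
rewrite sum_nat_const.
have -> : #|injs n k| = n ^_ k by rewrite card_inj_ffuns !card_ord.
apply: leq_trans. rewrite leq_add2l. apply: leq_mul => //.
case: k hk => [|j] // _.
rewrite ffact_diff subSS subn0. apply: leq_mul => //.
apply: leq_trans (ffact_lb _ _). apply: leq_pow. lia.
Qed.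

Lemma card_family n k m (A : {set {ffun 'I_k -> 'I_n}}) :
  #|[set G : config n k m | [forall a, G a \in A]]| = #|A| ^ m.
Proof.
transitivity #|@ffun_on_mem 'I_m _ (mem A)|; last by rewrite card_ffun_on card_ord.
apply: eq_card => G. rewrite inE. by apply/forallP/ffun_onP.
Qed.

Lemma total_countE n k m : total_count n k m = (n ^_ k) ^ m.
Proof.
have -> : n ^_ k = #|injs n k| by rewrite card_inj_ffuns !card_ord.
rewrite /total_count -card_family. apply: eq_card => G. rewrite !inE /valid_config.
apply/forallP/forallP => H a; move: (H a); by rewrite inE.
Qed.

Lemma stopE n k m d (G : config n k m) V :
  valid_config G && stopping_set d G V = [forall a, G a \in AV k d V].
Proof.
rewrite /valid_config /stopping_set.
apply/andP/forallP.
  case=> /forallP H1 /forallP H2 a. by rewrite inE inE H1 H2.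
move=> H; split; apply/forallP => a; move: (H a); rewrite !inE; case/andP => //.
Qed.

Lemma bad_le n k m d (small : nat -> bool) :
  bad_count n k m d small <=
  \sum_(V : {set 'I_n} | (V != set0) && small #|V|) #|AV k d V| ^ m.
Proof.
rewrite (eq_bigr (fun V => #|[set G : config n k m | [forall a, G a \in AV k d V]]|));
  last by move=> V _; rewrite card_family.
rewrite /bad_count card_as_sum.
rewrite (eq_bigr (fun V => \sum_G (G \in [set G : config n k m | [forall a, G a \in AV k d V]] : nat)));
  last by move=> V _; rewrite card_as_sum.
rewrite (exchange_big _ _ (index_enum _)) /=.
apply: leq_sum => G _.
rewrite inE. case: (boolP (valid_config G)) => //= vG.
case: (boolP [exists V, _]) => // /existsP [V /and3P[h1 h2 h3]].
rewrite (bigD1 V) /=; last by rewrite h1 h2.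
rewrite inE -stopE vG h3. by [].
Qed.

Lemma card_le_n n (V : {set 'I_n}) : #|V| < n.+1.
Proof. rewrite ltnS. have := max_card (mem V). by rewrite card_ord. Qed.

Lemma sum_by_card n (F : nat -> nat) :
  \sum_(V : {set 'I_n}) F #|V| = \sum_(s < n.+1) 'C(n, s) * F s.
Proof.
rewrite (partition_big (fun V : {set 'I_n} => (inord #|V| : 'I_n.+1)) xpredT) //=.
apply: eq_bigr => s _.
have hc : forall V : {set 'I_n}, (inord #|V| == s :> 'I_n.+1) = (#|V| == s).
  move=> V; apply/eqP/eqP => [<-|h]; first by rewrite inordK // card_le_n.
  by apply: val_inj; rewrite /= inordK // card_le_n.
rewrite (eq_bigr (fun _ => F s)); last by move=> V; rewrite hc => /eqP h; rewrite h.
rewrite sum_nat_cond_const. congr (_ * _).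
have := card_draws ('I_n) s; rewrite card_ord => <-. apply: eq_card => V. by rewrite !inE hc.
Qed.

Definition hmax n k m d (s : nat) : nat :=
  \max_(V : {set 'I_n} | #|V| == s) #|AV k d V| ^ m.

Lemma bad_le2 n k m d (small : nat -> bool) :
  bad_count n k m d small <=
  \sum_(s < n.+1) 'C(n, s) * (if (0 < s) && small s then @hmax n k m d s else 0).
Proof.
apply: leq_trans (bad_le _ _ _ _ _) _.
rewrite -(sum_by_card n (fun s => if (0 < s) && small s then @hmax n k m d s else 0)).
rewrite [X in _ <= X](bigID (fun V : {set 'I_n} => (V != set0) && small #|V|)) /=.
apply: leq_trans (leq_addr _ _). apply: leq_sum => V /andP[h1 h2].
rewrite card_gt0 h1 h2 /=. by apply: (leq_bigmax_cond V).
Qed.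


From Stdlib Require Import Reals Lra Lia Psatz ZArith.
Local Open Scope R_scope.

Fixpoint rsum (f : nat -> R) (N : nat) : R :=
  match N with O => 0 | S N => rsum f N + f N end.

Lemma INR_sum N (F : nat -> nat) :
  INR (\sum_(i < N) F i) = rsum (fun i => INR (F i)) N.
Proof.
elim: N => [|N IH]; first by rewrite big_ord0.
by rewrite big_ord_recr /= plus_INR IH.
Qed.

Lemma rsum_le f g N : (forall i, (i < N)%coq_nat -> f i <= g i) -> rsum f N <= rsum g N.
Proof.
elim: N => [|N IH] H /=; first lra.
apply: Rplus_le_compat; [apply: IH => i hi; apply: H; lia | apply: H; lia].
Qed.

Lemma rsum_plus f g N : rsum (fun i => f i + g i) N = rsum f N + rsum g N.
Proof. elim: N => [|N IH] /=; [lra | rewrite IH; lra]. Qed.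

Lemma rsum_scal c f N : rsum (fun i => c * f i) N = c * rsum f N.
Proof. elim: N => [|N IH] /=; [lra | rewrite IH; lra]. Qed.

Definition geo (r : R) (s : nat) : R := match s with O => 0 | _ => r ^ s end.

Lemma geo_sum r N : 0 <= r <= /2 -> rsum (geo r) (S N) <= 2 * r - 2 * r ^ (S N).
Proof.
move=> hr; elim: N => [|N IH]; first by rewrite /= ; lra.
change (rsum (geo r) N.+2) with (rsum (geo r) N.+1 + r ^ N.+1).
have h1 : 0 <= r ^ S N by apply: pow_le; lra.
have -> : r ^ S (S N) = r * r ^ S N by [].
nra.
Qed.

Lemma exp_pow x m : exp x ^ m = exp (INR m * x).
Proof.
elim: m => [|m IH]; first by rewrite /= Rmult_0_l exp_0.
change (exp x ^ m.+1) with (exp x * exp x ^ m). rewrite IH S_INR -exp_plus. f_equal. lra.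
Qed.

Lemma IZR_le_INR_toNat z : IZR z <= INR (Z.to_nat z).
Proof.
case: (Z_le_gt_dec 0 z) => h.
  rewrite INR_IZR_INZ Z2Nat.id //. lra.
have : IZR z < 0 by apply: IZR_lt; lia.
have := pos_INR (Z.to_nat z). lra.
Qed.

Lemma m_lb mu n : mu * INR n * ln (INR n) - 1 <= INR (num_constraints mu n).
Proof.
rewrite /num_constraints.
have := base_Int_part (mu * INR n * ln (INR n)).
have := IZR_le_INR_toNat (Int_part (mu * INR n * ln (INR n))). lra.
Qed.

Lemma nat_large (r : R) : exists N : nat, forall n : nat, (N <= n)%coq_nat -> r <= INR n.
Proof.
have [N hN] := INR_archimed 1 r Rlt_0_1.
exists N => n hn. have := le_INR _ _ hn. lra.
Qed.

Lemma bernoulli y j : 0 <= y <= 1 -> 1 - INR j * y <= (1 - y) ^ j.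
Proof.
move=> hy; elim: j => [|j IH]; first by rewrite /=; lra.
change ((1 - y) ^ j.+1) with ((1 - y) * (1 - y) ^ j). rewrite S_INR.
have h : 0 <= 1 - y by lra.
have : (1 - y) * (1 - INR j * y) <= (1 - y) * (1 - y) ^ j by apply: Rmult_le_compat_l.
have := pos_INR j. nra.
Qed.

Lemma INR_expn (a j : nat) : INR (expn a j) = INR a ^ j.
Proof. elim: j => [|j IH] //. rewrite expnS mult_INR IH. by []. Qed.

Definition qf (n k s : nat) := INR s * INR k * INR (n - s - k) ^ (k - 1) / INR n ^ k.

Lemma hmax_bound (n k m d s : nat) : (1 < d)%nat -> (0 < k)%nat -> (k <= n)%nat ->
  INR (@hmax n k m d s) <= INR (n ^_ k) ^ m * exp (- (INR m * qf n k s)).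
Proof.
move=> hd hk hkn.
set T := INR (n ^_ k).
have hT : 0 < T.
  rewrite /T. apply: lt_0_INR. apply/ltP; by rewrite ffact_gt0.
have hTN : T <= INR n ^ k by rewrite -INR_expn; apply: le_INR; apply/leP; exact: ffact_ub.
have hY : 0 <= T ^ m * exp (- (INR m * qf n k s)).
  apply: Rmult_le_pos; [apply: pow_le; lra | apply: Rlt_le; apply: exp_pos].
apply: (big_ind (fun x => INR x <= T ^ m * exp (- (INR m * qf n k s)))) => //.
- move=> x y hx hy. rewrite /maxn. by case: ifP.
move=> V /eqP hV.
have H := @AV_bound n k d V hd hk.
move/leP/le_INR: H. rewrite plus_INR !mult_INR INR_expn hV => H.
rewrite INR_expn.
set a := INR #|AV k d V| in H *.
set b := INR s * (INR k * INR (n - s - k) ^ (k - 1)) in H.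
have ha : 0 <= a by apply: pos_INR.
have hb : 0 <= b.
  apply: Rmult_le_pos; first by apply: pos_INR.
  apply: Rmult_le_pos; first by apply: pos_INR.
  apply: pow_le; apply: pos_INR.
have hq : qf n k s = b / INR n ^ k by rewrite /qf /b; field; lra.
have hbT : b / INR n ^ k <= b / T.
  apply: Rmult_le_compat_l => //. apply: Rinv_le_contravar => //.
have h1 : a <= T * exp (- qf n k s).
  have he := exp_ineq1_le (- qf n k s).
  have hbT' : T * (b / T) = b by field; lra.
  have h2 : T * qf n k s <= T * (b / T) by rewrite hq; apply: Rmult_le_compat_l; lra.
  have h3 : T * (1 + - qf n k s) <= T * exp (- qf n k s) by apply: Rmult_le_compat_l; lra.
  rewrite -/T in H. lra.
apply: Rle_trans (pow_incr _ _ m _) _.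
  split; first exact: ha. exact: h1.
rewrite Rpow_mult_distr exp_pow. right. f_equal. f_equal. lra.
Qed.

Lemma binom_le_pow (n s : nat) : ('C(n, s) <= expn n s)%nat.
Proof.
apply: leq_trans (ffact_ub n s). rewrite -bin_ffact. apply: leq_pmulr. exact: fact_gt0.
Qed.

Lemma qf_lb (n k s : nat) (y : R) : (0 < k)%nat -> 0 < INR n -> 0 <= y * INR n <= INR (n - s - k) ->
  INR s * INR k * y ^ (k - 1) / INR n <= qf n k s.
Proof.
move=> hk hN hy. rewrite /qf.
case: k hk hy => [|j] // _ hy.
have -> : (j.+1 - 1 = j)%nat by lia.
have hp : (y * INR n) ^ j <= INR (n - j.+1 - s) ^ j.
  apply: pow_incr. have -> : (n - j.+1 - s = n - s - j.+1)%nat by lia. lra.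
have -> : (n - s - j.+1 = n - j.+1 - s)%nat by lia.
rewrite Rpow_mult_distr in hp.
change (INR n ^ j.+1) with (INR n * INR n ^ j).
have hNj : 0 < INR n ^ j by apply: pow_lt.
have h0 : 0 <= INR s * INR j.+1 by apply: Rmult_le_pos; apply: pos_INR.
apply: (Rmult_le_reg_r (INR n * INR n ^ j)). nra.
have -> : INR s * INR j.+1 * y ^ j / INR n * (INR n * INR n ^ j) = INR s * INR j.+1 * (y ^ j * INR n ^ j) by field; lra.
have -> : INR s * INR j.+1 * INR (n - j.+1 - s) ^ j / (INR n * INR n ^ j) * (INR n * INR n ^ j) = INR s * INR j.+1 * INR (n - j.+1 - s) ^ j by field; lra.
apply: Rmult_le_compat_l => //.
Qed.

Lemma qf_ub (n k s : nat) : (0 < k)%nat -> 0 < INR n -> (s <= n)%nat -> qf n k s <= INR k.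
Proof.
move=> hk hN hs. rewrite /qf.
case: k hk => [|j] // _.
have -> : (j.+1 - 1 = j)%nat by lia.
change (INR n ^ j.+1) with (INR n * INR n ^ j).
have hNj : 0 < INR n ^ j by apply: pow_lt.
have hx : INR (n - s - j.+1) ^ j <= INR n ^ j.
  apply: pow_incr; split; first exact: pos_INR. apply: le_INR; apply/leP; lia.
have hsn : INR s <= INR n by apply: le_INR; apply/leP.
have hs0 := pos_INR s. have hk0 := pos_INR j.+1.
apply: (Rmult_le_reg_r (INR n * INR n ^ j)). nra.
have -> : INR s * INR j.+1 * INR (n - s - j.+1) ^ j / (INR n * INR n ^ j) * (INR n * INR n ^ j) = INR s * INR j.+1 * INR (n - s - j.+1) ^ j by field; lra.
have h1 : INR s * INR j.+1 * INR (n - s - j.+1) ^ j <= INR s * INR j.+1 * INR n ^ j.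
  apply: Rmult_le_compat_l => //. nra.
have h2 : INR s * INR j.+1 * INR n ^ j <= INR n * INR j.+1 * INR n ^ j.
  apply: Rmult_le_compat_r; first lra. apply: Rmult_le_compat_r; lra.
lra.
Qed.

Lemma geo_S r s : geo r s.+1 = r ^ s.+1. Proof. by []. Qed.
Lemma geo_0 r : geo r 0 = 0. Proof. by []. Qed.

Lemma ln_le' x y : 0 < x -> x <= y -> ln x <= ln y.
Proof. move=> hx [h|->]; [apply: Rlt_le; exact: ln_increasing | lra]. Qed.

Lemma exp_le' x y : x <= y -> exp x <= exp y.
Proof. move=> [h|->]; [apply: Rlt_le; exact: exp_increasing | lra]. Qed.

Lemma ln2_pos : 0 < ln 2.
Proof. rewrite -ln_1; apply: ln_increasing; lra. Qed.

Lemma INR_sub_sk (n s k : nat) : INR s + INR k <= INR n -> INR (n - s - k) = INR n - INR s - INR k.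
Proof.
move=> h. rewrite -plus_INR in h. have /leP h' := INR_le _ _ h.
have -> : INR n = INR ((n - s - k) + (s + k)) by f_equal; lia.
rewrite !plus_INR. lra.
Qed.

Lemma binom_le_exp (n s : nat) : 0 < INR n -> INR 'C(n, s) <= exp (INR s * ln (INR n)).
Proof.
move=> hN. rewrite -exp_pow exp_ln // -INR_expn. apply: le_INR; apply/leP; exact: binom_le_pow.
Qed.

Lemma term_bound (k d n s : nat) (alpha mu eps N L K delta : R) :
 INR n = N -> ln N = L -> INR k = K -> delta = eps / (2 * mu * K ^ 2) ->
 (1 < d)%nat -> (2 <= k)%nat -> (s <= n)%nat ->
 0 < alpha < 1 -> 0 < mu -> 0 < eps < mu * K ->
 2 <= N -> K <= delta * N -> K <= (1 - alpha) * N / 2 ->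
 / INR (n ^_ k) ^ (num_constraints mu n) *
   (INR 'C(n, s) * INR (if (0 < s)%nat && alpha_small alpha n s
                        then @hmax n k (num_constraints mu n) d s else 0%nat))
 <= exp K * geo (exp ((1 - mu * K + eps) * L)) s
    + exp K * exp (- (mu * delta * K * ((1 - alpha) / 2) ^ (k - 1) * N * L)) * INR 'C(n, s).
Proof.
move=> eN eL eK edelta hd hk hs ha hmu heps hN2 hR2 hR3.
set m := num_constraints mu n.
have hK2 : 2 <= K.
  have h := le_INR 2 k (elimT leP hk). rewrite -eK. change (INR 2) with (1+1) in h. lra.
have hL : ln 2 <= L by rewrite -eL; apply: ln_le'; lra.
have hL0 : 0 < L by have := ln2_pos; lra.
have hdelta : 0 < delta.
  rewrite edelta. apply: Rdiv_lt_0_compat; [lra|]. apply: Rmult_lt_0_compat; [lra|]. nra.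
have hkn : (k <= n)%nat.
  apply/leP; apply: INR_le. rewrite eN eK. nra.
have hT : 0 < INR (n ^_ k) by apply: lt_0_INR; apply/ltP; rewrite ffact_gt0.
have hTm : 0 < INR (n ^_ k) ^ m by apply: pow_lt.
have hgeo : 0 <= geo (exp ((1 - mu * K + eps) * L)) s.
  case: s {hs} => [|s]; [rewrite geo_0; lra | rewrite geo_S; apply: pow_le; apply: Rlt_le; apply: exp_pos].
have heK := exp_pos K.
have hC0 := pos_INR 'C(n, s).
have hZ := exp_pos (- (mu * delta * K * ((1 - alpha) / 2) ^ (k - 1) * N * L)).
case: ifP => hc; last first.
  rewrite Rmult_0_r Rmult_0_r. apply: Rplus_le_le_0_compat; [nra|].
  apply: Rmult_le_pos => //. nra.
case/andP: hc => hs0 hsa.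
have hsa' : INR s < alpha * N.
  move: hsa; rewrite /alpha_small -eN; by case: Rlt_dec.
have hs1 : 1 <= INR s by apply: (le_INR 1); apply/leP.
have hH := @hmax_bound n k m d s hd (ltnW hk) hkn.
set q := qf n k s in hH.
have hq0 : 0 <= q.
  rewrite /q /qf. apply: Rmult_le_pos; last by apply: Rlt_le; apply: Rinv_0_lt_compat; apply: pow_lt; lra.
  apply: Rmult_le_pos; [apply: Rmult_le_pos; apply: pos_INR|apply: pow_le; apply: pos_INR].
have hqK : q <= K by rewrite -eK; apply: qf_ub => //; [apply: ltnW | lra].
have hm := m_lb mu n. rewrite -/m eN eL in hm.
have hmq : mu * N * L * q - K <= INR m * q.
  have : 0 <= (INR m - (mu * N * L - 1)) * q by apply: Rmult_le_pos; lra.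
  nra.
have hexp : exp (- (INR m * q)) <= exp K * exp (- (mu * N * L * q)).
  rewrite -exp_plus. apply: exp_le'. lra.
have hstep : / INR (n ^_ k) ^ m * (INR 'C(n, s) * INR (@hmax n k m d s))
             <= INR 'C(n, s) * (exp K * exp (- (mu * N * L * q))).
  apply: (Rle_trans _ (INR 'C(n, s) * exp (- (INR m * q)))).
    apply: (Rmult_le_reg_l (INR (n ^_ k) ^ m)) => //.
    rewrite -Rmult_assoc Rinv_r; last lra.
    rewrite Rmult_1_l. have -> : INR (n ^_ k) ^ m * (INR 'C(n, s) * exp (- (INR m * q)))
      = INR 'C(n, s) * (INR (n ^_ k) ^ m * exp (- (INR m * q))) by ring.
    apply: Rmult_le_compat_l => //.
  by apply: Rmult_le_compat_l.
apply: Rle_trans hstep _.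
have hdK : 2 * delta * K < 1.
  have e1 : delta * (2 * mu * K ^ 2) = eps by rewrite edelta; field; split; lra.
  nra.
have hN0 : 0 < N by lra.
have hCexp : INR 'C(n, s) <= exp (INR s * L) by rewrite -eL -eN; apply: binom_le_exp; lra.
have hCpos : 0 <= exp K * exp (- (mu * delta * K * ((1 - alpha) / 2) ^ (k - 1) * N * L)) * INR 'C(n, s).
  apply: Rmult_le_pos => //. nra.
have hKm1 : INR (k - 1) = K - 1 by rewrite minus_INR; [rewrite eK; simpl; lra | apply/leP; lia].
case: (Rle_dec (INR s) (delta * N)) => hsd.
  have hsk : INR s + INR k <= INR n by rewrite eK eN; nra.
  have hx := INR_sub_sk hsk. rewrite eK eN in hx.
  set y := 1 - 2 * delta.
  have hyN : 0 <= y * N <= INR (n - s - k) by rewrite hx /y; split; nra.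
  have hq1 := @qf_lb n k s y (ltnW hk) ltac:(rewrite eN; lra) ltac:(rewrite eN; exact: hyN).
  rewrite -/q eN eK in hq1.
  have hy := @bernoulli (2 * delta) (k - 1) ltac:(split; nra).
  rewrite hKm1 -/y in hy.
  have hyp : 0 <= y ^ (k - 1) by apply: pow_le; rewrite /y; nra.
  have hsK : 0 <= INR s * K by nra.
  have e2 : mu * N * L * (INR s * K * y ^ (k - 1) / N) = mu * L * (INR s * K) * y ^ (k - 1)
    by field; lra.
  have h3 : mu * N * L * (INR s * K * y ^ (k - 1) / N) <= mu * N * L * q.
    apply: Rmult_le_compat_l => //. apply: Rmult_le_pos; [|lra]. nra.
  have h4 : mu * L * (INR s * K) * (1 - (K - 1) * (2 * delta)) <= mu * L * (INR s * K) * y ^ (k - 1).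
    apply: Rmult_le_compat_l => //. apply: Rmult_le_pos => //. nra.
  have e1 : delta * (2 * mu * K ^ 2) = eps by rewrite edelta; field; split; lra.
  have h5 : (mu * K - eps) * INR s * L <= mu * L * (INR s * K) * (1 - (K - 1) * (2 * delta)).
    have : 0 <= 2 * delta * mu * K * INR s * L.
      apply: Rmult_le_pos; [|lra]. apply: Rmult_le_pos; [|lra]. nra.
    nra.
  have hE : exp (- (mu * N * L * q)) <= exp (- ((mu * K - eps) * INR s * L)) by apply: exp_le'; lra.
  have hsS : exists s', s = s'.+1 by exists s.-1; rewrite prednK.
  case: hsS => s' es.
  have hg : geo (exp ((1 - mu * K + eps) * L)) s = exp (INR s * L) * exp (- ((mu * K - eps) * INR s * L)).
    rewrite es geo_S exp_pow -es -exp_plus. f_equal. ring.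
  rewrite hg.
  have : INR 'C(n, s) * exp (- (mu * N * L * q)) <= exp (INR s * L) * exp (- ((mu * K - eps) * INR s * L)).
    apply: Rmult_le_compat => //; apply: Rlt_le; apply: exp_pos.
  move=> h6.
  have : exp K * (INR 'C(n, s) * exp (- (mu * N * L * q))) <= exp K * (exp (INR s * L) * exp (- ((mu * K - eps) * INR s * L))).
    by apply: Rmult_le_compat_l; lra.
  lra.
have hsd' : delta * N < INR s by apply: Rnot_le_lt.
have hsk : INR s + INR k <= INR n by rewrite eK eN; nra.
have hx := INR_sub_sk hsk. rewrite eK eN in hx.
set y := (1 - alpha) / 2.
have hyN : 0 <= y * N <= INR (n - s - k) by rewrite hx /y; split; nra.
have hq1 := @qf_lb n k s y (ltnW hk) ltac:(rewrite eN; lra) ltac:(rewrite eN; exact: hyN).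
rewrite -/q eN eK in hq1.
have hyp : 0 <= y ^ (k - 1) by apply: pow_le; rewrite /y; lra.
have e2 : mu * N * L * (INR s * K * y ^ (k - 1) / N) = mu * L * K * y ^ (k - 1) * INR s
  by field; lra.
have h3 : mu * N * L * (INR s * K * y ^ (k - 1) / N) <= mu * N * L * q.
  apply: Rmult_le_compat_l => //. apply: Rmult_le_pos; [|lra]. nra.
have hc : 0 <= mu * L * K * y ^ (k - 1).
  apply: Rmult_le_pos => //. apply: Rmult_le_pos; [|lra]. nra.
have h4 : mu * L * K * y ^ (k - 1) * (delta * N) <= mu * L * K * y ^ (k - 1) * INR s.
  apply: Rmult_le_compat_l => //. lra.
have hE : exp (- (mu * N * L * q)) <= exp (- (mu * delta * K * y ^ (k - 1) * N * L)).
  apply: exp_le'.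
  have : mu * delta * K * y ^ (k - 1) * N * L = mu * L * K * y ^ (k - 1) * (delta * N) by ring.
  lra.
have : INR 'C(n, s) * exp (- (mu * N * L * q)) <= INR 'C(n, s) * exp (- (mu * delta * K * y ^ (k - 1) * N * L))
  by apply: Rmult_le_compat_l.
move=> h6.
have : exp K * (INR 'C(n, s) * exp (- (mu * N * L * q))) <= exp K * (INR 'C(n, s) * exp (- (mu * delta * K * y ^ (k - 1) * N * L)))
  by apply: Rmult_le_compat_l; lra.
have hg : 0 <= exp K * geo (exp ((1 - mu * K + eps) * L)) s by apply: Rmult_le_pos; lra.
move=> h7.
have -> : exp K * exp (- (mu * delta * K * y ^ (k - 1) * N * L)) * INR 'C(n, s)
   = exp K * (INR 'C(n, s) * exp (- (mu * delta * K * y ^ (k - 1) * N * L))) by ring.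
lra.
Qed.

Lemma sum_binom (n : nat) : (\sum_(i < n.+1) 'C(n, i))%nat = expn 2 n.
Proof.
have := expnDn 1 1 n. rewrite addn1 => ->. apply: eq_bigr => i _. by rewrite !exp1n !muln1.
Qed.

Lemma rsum_ext f g N : (forall i, f i = g i) -> rsum f N = rsum g N.
Proof. move=> h; elim: N => [|N IH] //=; by rewrite IH h. Qed.

Lemma mainTheorem3_aux (k d : nat) (alpha mu eps : R) :
  (2 <= k)%nat -> (2 <= d)%nat -> (d <= k)%nat ->
  0 < alpha < 1 ->
  / INR k < mu ->
  0 < eps < mu * INR k - 1 ->
  exists (C : R) (N : nat), forall n : nat, (N <= n)%nat ->
    prob_small_stopping k d alpha mu n
      <= C * Rpower (INR n) (1 - mu * INR k + eps).
Proof.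
move=> hk hd hdk ha hmuK heps.
have hK2 : 2 <= INR k.
  have h := le_INR 2 k (elimT leP hk). change (INR 2) with (1+1) in h. lra.
have hmu : 0 < mu.
  have : 0 < / INR k by apply: Rinv_0_lt_compat; lra. lra.
set K := INR k in hK2 heps hmuK *.
set beta := 1 - mu * K + eps.
have hbeta : beta < 0 by rewrite /beta; lra.
set delta := eps / (2 * mu * K ^ 2).
have hdelta : 0 < delta.
  rewrite /delta. apply: Rdiv_lt_0_compat; [lra|]. apply: Rmult_lt_0_compat; [lra|]. nra.
set gam := mu * delta * K * ((1 - alpha) / 2) ^ (k - 1).
have hgam : 0 < gam.
  rewrite /gam. apply: Rmult_lt_0_compat; [|apply: pow_lt; lra].
  apply: Rmult_lt_0_compat; [|lra]. by apply: Rmult_lt_0_compat.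
have hl2 := ln2_pos.
set a1 := 2. set a2 := K / delta. set a3 := 2 * K / (1 - alpha). set a4 := exp (2 * ln 2 / gam).
set a5 := - 2 * beta / gam. set a6 := exp (ln 2 / - beta).
set r := Rmax (Rmax (Rmax a1 a2) (Rmax a3 a4)) (Rmax a5 a6).
have hr1 : a1 <= r /\ a2 <= r /\ a3 <= r /\ a4 <= r /\ a5 <= r /\ a6 <= r.
  have := Rmax_l a1 a2. have := Rmax_r a1 a2. have := Rmax_l a3 a4. have := Rmax_r a3 a4.
  have := Rmax_l a5 a6. have := Rmax_r a5 a6.
  have := Rmax_l (Rmax a1 a2) (Rmax a3 a4). have := Rmax_r (Rmax a1 a2) (Rmax a3 a4).
  have := Rmax_l (Rmax (Rmax a1 a2) (Rmax a3 a4)) (Rmax a5 a6).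
  have := Rmax_r (Rmax (Rmax a1 a2) (Rmax a3 a4)) (Rmax a5 a6).
  rewrite -/r. lra.
have [N0 hN0] := nat_large r.
exists (3 * exp K), N0 => n /leP hn.
have hr := hN0 n hn.
set N := INR n in hr *.
case: hr1 => h1 [h2 [h3 [h4 [h5 h6]]]].
rewrite /a1 /a2 /a3 /a4 /a5 /a6 in h1 h2 h3 h4 h5 h6.
have hN2 : 2 <= N by lra.
have hN0' : 0 < N by lra.
have hR2 : K <= delta * N.
  have : K / delta * delta <= N * delta by apply: Rmult_le_compat_r; lra.
  have -> : K / delta * delta = K by field; lra. lra.
have hR3 : K <= (1 - alpha) * N / 2.
  have : 2 * K / (1 - alpha) * (1 - alpha) <= N * (1 - alpha) by apply: Rmult_le_compat_r; lra.
  have -> : 2 * K / (1 - alpha) * (1 - alpha) = 2 * K by field; lra. lra.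
set L := ln N.
have hR4 : 2 * ln 2 / gam <= L.
  rewrite /L -[2 * ln 2 / gam]ln_exp. apply: ln_le' => //. exact: exp_pos. lra.
have hR5 : - 2 * beta <= gam * N.
  have : - 2 * beta / gam * gam <= N * gam by apply: Rmult_le_compat_r; lra.
  have -> : - 2 * beta / gam * gam = - 2 * beta by field; lra. lra.
have hR6 : ln 2 / - beta <= L.
  rewrite /L -[ln 2 / - beta]ln_exp. apply: ln_le' => //. exact: exp_pos. lra.
have hL4 : 2 * ln 2 <= gam * L.
  have : 2 * ln 2 / gam * gam <= L * gam by apply: Rmult_le_compat_r; lra.
  have -> : 2 * ln 2 / gam * gam = 2 * ln 2 by field; lra. lra.
have hL6 : ln 2 <= - beta * L.
  have : ln 2 / - beta * - beta <= L * - beta by apply: Rmult_le_compat_r; lra.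
  have -> : ln 2 / - beta * - beta = ln 2 by field; lra. lra.
have hL0 : 0 < L by nra.
have hkn : (k <= n)%nat by apply/leP; apply: INR_le; rewrite -/N -/K; nra.
set m := num_constraints mu n.
set T := INR (n ^_ k).
have hT : 0 < T by apply: lt_0_INR; apply/ltP; rewrite ffact_gt0.
have hTm : 0 < T ^ m by apply: pow_lt.
rewrite /prob_small_stopping -/m total_countE INR_expn -/T.
set F := fun s : nat => if (0 < s)%nat && alpha_small alpha n s then @hmax n k m d s else 0%nat.
have hbad := bad_le2 n k m d (alpha_small alpha n).
have hbadR : INR (bad_count n k m d (alpha_small alpha n))
     <= rsum (fun s => INR 'C(n, s) * INR (F s)) n.+1.
  move/leP/le_INR: hbad. rewrite (INR_sum n.+1 (fun s => muln 'C(n, s) (F s))) => h. apply: Rle_trans h _. right.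
  apply: rsum_ext => s. by rewrite mult_INR.
set rho := exp (beta * L).
set Z := exp (- (gam * N * L)).
have hsum : rsum (fun s => / T ^ m * (INR 'C(n, s) * INR (F s))) n.+1
   <= rsum (fun s => exp K * geo rho s + exp K * Z * INR 'C(n, s)) n.+1.
  apply: rsum_le => s hs.
  have hs' : (s <= n)%nat by apply/leP; lia.
  exact: (@term_bound k d n s alpha mu eps N L K delta erefl erefl erefl erefl
    hd hk hs' ha hmu ltac:(lra) hN2 hR2 hR3).
rewrite rsum_plus (rsum_scal (exp K) (geo rho)) (rsum_scal (exp K * Z) (fun s => INR 'C(n, s))) in hsum.
rewrite -(INR_sum n.+1 (fun s => 'C(n, s))) sum_binom INR_expn in hsum.
have hrho0 : 0 < rho by apply: exp_pos.
have hrho : rho <= / 2.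
  have e3 : exp (ln (/ 2)) = / 2 := exp_ln (/ 2) ltac:(lra).
  rewrite /rho -e3 ln_Rinv; last lra.
  apply: exp_le'. nra.
have hgeo := @geo_sum rho n ltac:(lra).
have hpn : 0 <= rho ^ n.+1 by apply: pow_le; lra.
have h2n : INR 2 ^ n = exp (N * ln 2).
  have e2 : INR 2 = 2 by simpl; lra.
  have e3 : exp (ln 2) = 2 := exp_ln 2 ltac:(lra).
  by rewrite e2 -{1}e3 exp_pow.
rewrite h2n in hsum.
have hZ2 : Z * exp (N * ln 2) <= rho.
  rewrite /Z /rho -exp_plus. apply: exp_le'.
  have : 0 <= (gam * L - 2 * ln 2) * N by apply: Rmult_le_pos; lra.
  have : 0 <= (gam * N + 2 * beta) * L by apply: Rmult_le_pos; lra.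
  nra.
have heK := exp_pos K.
have hlhs : INR (bad_count n k m d (alpha_small alpha n)) / T ^ m
   <= rsum (fun s => / T ^ m * (INR 'C(n, s) * INR (F s))) n.+1.
  rewrite rsum_scal. rewrite /Rdiv Rmult_comm. apply: Rmult_le_compat_l => //.
  apply: Rlt_le; exact: Rinv_0_lt_compat.
rewrite /Rpower -/L -/rho.
have : exp K * rsum (geo rho) n.+1 <= exp K * (2 * rho) by apply: Rmult_le_compat_l; lra.
have : exp K * Z * exp (N * ln 2) <= exp K * rho.
  rewrite Rmult_assoc. apply: Rmult_le_compat_l; lra.
lra.
Qed.


Theorem mainTheorem3 (k d : nat) (alpha mu eps : R) :
  le 2 k -> le 2 d -> le d k ->
  0 < alpha < 1 ->
  / INR k < mu ->
  0 < eps < mu * INR k - 1 ->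
  exists (C : R) (N : nat), forall n : nat, le N n ->
    prob_small_stopping k d alpha mu n
      <= C * Rpower (INR n) (1 - mu * INR k + eps).
Proof.
move=> /leP hk /leP hd /leP hdk ha hmu heps.
have [C [N H]] := mainTheorem3_aux hk hd hdk ha hmu heps.
exists C, N => n /leP hn. exact: H.
Qed.
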